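(* Let $\alpha,\beta,\gamma>-1$ be real numbers with $|\alpha-\gamma|<1$ and $\alpha+\beta\le -1$, and let $N\ge1$ be an integer. Let $\tilde H$ be the $N\times N$ matrix with entries \[ \tilde H_{jk}=\frac{\Gamma(j+k+\alpha+\beta+1)}{\Gamma(j+k+\gamma+\beta+2)},\qquad 1\le j,k\le N. \] Then $\tilde H$ is real, symmetric and positive semidefinite.
   Context: $\Gamma$ denotes the gamma function. $\tilde H$ is the trailing submatrix (rows and columns indexed from $1$) of the Hankel part of the conversion matrix from Jacobi $(\alpha,\beta)$ coefficients to Jacobi $(\gamma,\beta)$ coefficients. *)

(* Defs.v *)
From Stdlib Require Import Reals ClassicalEpsilon Factorial.
Open Scope R_scope.

(* Stdlib has no Gamma function.  We define it (for x > 0, which is the only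
   range used) by Gauss' product formula
     Gamma x = lim_{n -> oo} n! n^x / (x (x+1) ... (x+n)). *)
Fixpoint rising_prod (x : R) (n : nat) : R :=
  match n with
  | O => x
  | S m => rising_prod x m * (x + INR (S m))
  end.

Definition gauss_seq (x : R) (n : nat) : R :=
  INR (fact n) * Rpower (INR n) x / rising_prod x n.

Definition Gamma (x : R) : R :=
  epsilon (inhabits 0) (fun l => Un_cv (gauss_seq x) l).

Definition Htilde (alpha beta gamma : R) (j k : nat) : R :=
  Gamma (INR (j + k) + alpha + beta + 1) / Gamma (INR (j + k) + gamma + beta + 2).

Definition quad_form (N : nat) (H : nat -> nat -> R) (v : nat -> R) : R :=
  sum_f 1 N (fun j => sum_f 1 N (fun k => v j * H j k * v k)).

(* Main.v *)
Require Import Defs.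
From Stdlib Require Import Reals ClassicalEpsilon Factorial Lra Lia ZArith List.
From Coquelicot Require Import Coquelicot.
Import ListNotations.
Open Scope R_scope.

Lemma exp_tangent y z : exp z * (1 + y - z) <= exp y.
Proof.
  replace y with (z + (y - z)) at 2 by ring. rewrite exp_plus.
  apply Rmult_le_compat_l. left; apply exp_pos.
  pose proof (exp_ineq1_le (y - z)). lra.
Qed.

Lemma bern x q : 0 <= x <= 1 -> 0 < q -> Rpower q x <= 1 + x * (q - 1).
Proof.
  intros [h0 h1] hq. unfold Rpower.
  set (L := ln q). set (A := exp (x * L)).
  assert (e1 := exp_tangent L (x * L)). assert (e2 := exp_tangent 0 (x * L)).
  rewrite exp_0 in e2. assert (eq : exp L = q) by (apply exp_ln; auto).
  rewrite eq in e1. fold A in e1, e2.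
  assert (t1 : x * (A * (1 + L - x * L)) <= x * q) by (apply Rmult_le_compat_l; lra).
  assert (t2 : (1 - x) * (A * (1 + 0 - x * L)) <= (1 - x) * 1) by (apply Rmult_le_compat_l; lra).
  assert (x * (A * (1 + L - x * L)) + (1 - x) * (A * (1 + 0 - x * L)) = A) by ring.
  lra.
Qed.

Lemma ln_ge y : 0 < y -> 1 - / y <= ln y.
Proof.
  intro hy. pose proof (exp_ineq1_le (ln (/ y))).
  rewrite exp_ln in H by (apply Rinv_0_lt_compat; auto).
  rewrite ln_Rinv in H by auto. lra.
Qed.

Lemma rp_pos x n : 0 < x -> 0 < rising_prod x n.
Proof.
  intro hx; induction n; cbn [rising_prod]; auto.
  apply Rmult_lt_0_compat; auto. pose proof (pos_INR (S n)); lra.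
Qed.

Lemma gauss_pos x n : 0 < x -> 0 < gauss_seq x n.
Proof.
  intro hx; unfold gauss_seq, Rdiv. apply Rmult_lt_0_compat.
  apply Rmult_lt_0_compat. apply lt_0_INR, lt_O_fact. apply exp_pos.
  apply Rinv_0_lt_compat, rp_pos; auto.
Qed.

Lemma gauss_ratio x m : 0 < x -> (1 <= m)%nat ->
  gauss_seq x (S m) = gauss_seq x m *
    (INR (S m) * Rpower (INR (S m) / INR m) x / (x + INR (S m))).
Proof.
  intros hx hm. unfold gauss_seq. cbn [rising_prod].
  assert (hM : 0 < INR m) by (apply lt_0_INR; lia).
  assert (hM1 : 0 < INR (S m)) by (apply lt_0_INR; lia).
  assert (E : Rpower (INR (S m)) x = Rpower (INR m) x * Rpower (INR (S m) / INR m) x).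
  { rewrite Rpower_mult_distr; auto. f_equal. field. lra.
    apply Rdiv_lt_0_compat; auto. }
  rewrite E, fact_simpl, mult_INR.
  assert (0 < rising_prod x m) by (apply rp_pos; auto).
  field. split; lra.
Qed.

Lemma gauss_incr x m : 0 < x -> (1 <= m)%nat -> gauss_seq x m <= gauss_seq x (S m).
Proof.
  intros hx hm. rewrite gauss_ratio by auto.
  assert (hM : 0 < INR m) by (apply lt_0_INR; lia).
  assert (hM1 : INR (S m) = INR m + 1) by apply S_INR.
  set (q := INR (S m) / INR m).
  assert (hq : 0 < q) by (unfold q; apply Rdiv_lt_0_compat; lra).
  assert (h1 : 1 + x * ln q <= Rpower q x).
  { unfold Rpower. pose proof (exp_ineq1_le (x * ln q)). lra. }
  assert (h2 : 1 - / q <= ln q) by (apply ln_ge; auto).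
  assert (h3 : / q = INR m / INR (S m)) by (unfold q; field; lra).
  assert (h4 : x * (1 - / q) <= x * ln q) by (apply Rmult_le_compat_l; lra).
  assert (h5 : x * (1 - / q) = x / INR (S m)) by (rewrite h3, hM1; field; lra).
  assert (h6 : 1 <= INR (S m) * Rpower q x / (x + INR (S m))).
  { apply Rcomplements.Rle_div_r. lra.
    assert (INR (S m) * (1 + x / INR (S m)) <= INR (S m) * Rpower q x)
      by (apply Rmult_le_compat_l; lra).
    assert (INR (S m) * (1 + x / INR (S m)) = x + INR (S m)) by (field; lra). lra. }
  pose proof (gauss_pos x m hx).
  assert (gauss_seq x m * 1 <= gauss_seq x m * (INR (S m) * Rpower q x / (x + INR (S m))))
    by (apply Rmult_le_compat_l; lra). lra.
Qed.

Lemma gauss_1 x : 0 < x -> gauss_seq x 1 = / (x * (x + 1)).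
Proof.
  intro hx. unfold gauss_seq, Rpower. cbn [rising_prod fact].
  replace (INR 1) with 1 by reflexivity. rewrite ln_1, Rmult_0_r, exp_0.
  simpl (INR (1*1)). field. lra.
Qed.

Lemma gauss_bound x n : 0 < x <= 1 -> (1 <= n)%nat ->
  gauss_seq x n <= gauss_seq x n * ((INR n + x) / INR n) <= / x.
Proof.
  intros hx hn. induction n as [|m IH]; [lia|].
  assert (hM1 : INR (S m) = INR m + 1) by apply S_INR.
  pose proof (gauss_pos x (S m) (proj1 hx)).
  assert (hw : gauss_seq x (S m) <= gauss_seq x (S m) * ((INR (S m) + x) / INR (S m))).
  { assert (0 < INR (S m)) by (apply lt_0_INR; lia).
    assert (1 <= (INR (S m) + x) / INR (S m)).
    { apply Rcomplements.Rle_div_r; lra. }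
    assert (gauss_seq x (S m) * 1 <= gauss_seq x (S m) * ((INR (S m) + x) / INR (S m)))
      by (apply Rmult_le_compat_l; lra). lra. }
  split; auto.
  destruct m as [|m].
  - rewrite gauss_1 by lra. replace (INR 1) with 1 by reflexivity.
    right; field; lra.
  - assert (hm : (1 <= S m)%nat) by lia. specialize (IH hm).
    rewrite gauss_ratio by (lra || lia).
    set (M := INR (S m)) in *. set (M1 := INR (S (S m))) in *.
    assert (hM : 0 < M) by (apply lt_0_INR; lia).
    assert (hq : 0 < M1 / M) by (apply Rdiv_lt_0_compat; lra).
    pose proof (bern x (M1 / M) ltac:(lra) hq) as hb.
    assert (E : gauss_seq x (S m) * (M1 * Rpower (M1 / M) x / (x + M1)) * ((M1 + x) / M1)
              = gauss_seq x (S m) * Rpower (M1 / M) x) by (field; lra).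
    rewrite E.
    assert (E2 : 1 + x * (M1 / M - 1) = (M + x) / M) by (rewrite hM1; field; lra).
    pose proof (gauss_pos x (S m) (proj1 hx)).
    assert (gauss_seq x (S m) * Rpower (M1 / M) x <= gauss_seq x (S m) * ((M + x) / M))
      by (apply Rmult_le_compat_l; lra). lra.
Qed.

Lemma conv_base x : 0 < x <= 1 -> exists l, 0 < l /\ is_lim_seq (gauss_seq x) l.
Proof.
  intro hx.
  set (u := fun n => gauss_seq x (S n)).
  assert (hinc : forall n, u n <= u (S n)) by (intro n; apply gauss_incr; lra || lia).
  assert (hbd : forall n, u n <= / x).
  { intro n. assert (h1 : (1 <= S n)%nat) by lia. pose proof (gauss_bound x (S n) hx h1). unfold u; lra. }
  pose proof (Lim_seq_correct' u (ex_finite_lim_seq_incr u (/ x) hinc hbd)) as hl.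
  exists (real (Lim_seq u)). split.
  - assert (hle : Rbar_le (u 0%nat) (real (Lim_seq u))).
    { apply (is_lim_seq_le (fun _ => u 0%nat) u (u 0%nat) (real (Lim_seq u))). intro n. induction n; [lra|].
      eapply Rle_trans; [exact IHn| apply hinc]. apply is_lim_seq_const. exact hl. }
    pose proof (gauss_pos x 1 (proj1 hx)) as hp. simpl in hle. unfold u in hle.
    eapply Rlt_le_trans; [exact hp| exact hle].
  - apply is_lim_seq_incr_1. exact hl.
Qed.

Lemma rp_shift x n : rising_prod (x + 1) n * x = rising_prod x n * (x + 1 + INR n).
Proof.
  induction n as [|m IH]; cbn [rising_prod].
  - simpl. ring.
  - rewrite S_INR. transitivity (rising_prod (x + 1) m * x * (x + 1 + (INR m + 1))). ring.
    rewrite IH. ring.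
Qed.

Lemma gauss_shift x m : 0 < x ->
  gauss_seq (x + 1) (S m) = gauss_seq x (S m) * (INR (S m) * x / (x + 1 + INR (S m))).
Proof.
  intros hx.
  assert (hM : 0 < INR (S m)) by (apply lt_0_INR; lia).
  unfold gauss_seq. rewrite Rpower_plus, Rpower_1 by auto.
  assert (E : rising_prod (x + 1) (S m) = rising_prod x (S m) * (x + 1 + INR (S m)) / x).
  { rewrite <- rp_shift. field. lra. }
  rewrite E. pose proof (rp_pos x (S m) hx). field. lra.
Qed.

Lemma lim_aux x : 0 < x -> is_lim_seq (fun n => INR n * x / (x + 1 + INR n)) x.
Proof.
  intro hx.
  apply is_lim_seq_ext with (fun n => x - x * (x + 1) * / (x + 1 + INR n)).
  { intro n. pose proof (pos_INR n). field. lra. }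
  replace (Finite x) with (Finite (x - x * (x + 1) * 0)) by (f_equal; ring).
  apply is_lim_seq_minus'. apply is_lim_seq_const.
  apply is_lim_seq_scal_l with (lu := Finite 0) (a := x * (x + 1)).
  replace (Finite 0) with (Rbar_inv p_infty) by reflexivity.
  apply is_lim_seq_inv; [|discriminate].
  eapply is_lim_seq_le_p_loc with (u := INR). exists 0%nat. intros n _. lra.
  apply is_lim_seq_INR.
Qed.

Lemma conv_all x : 0 < x -> exists l, 0 < l /\ is_lim_seq (gauss_seq x) l.
Proof.
  intro hx. destruct (archimed x) as [h1 _].
  assert (exists k : nat, x <= INR k + 1) as [k hk].
  { exists (Z.to_nat (up x)). rewrite INR_IZR_INZ, Z2Nat.id. lra.
    apply le_IZR. lra. }
  clear h1. revert x hx hk. induction k as [|k IH]; intros x hx hk.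
  - apply conv_base. simpl in hk. lra.
  - destruct (Rle_dec x 1). apply conv_base; lra.
    rewrite S_INR in hk. destruct (IH (x - 1) ltac:(lra) ltac:(lra)) as [l [hl hc]].
    exists (l * (x - 1)). split. apply Rmult_lt_0_compat; lra.
    apply is_lim_seq_incr_1.
    apply is_lim_seq_ext with (fun m => gauss_seq (x - 1) (S m) * (INR (S m) * (x - 1) / (x - 1 + 1 + INR (S m)))).
    { intro m. rewrite <- gauss_shift by lra. f_equal. ring. }
    apply is_lim_seq_mult'. apply (is_lim_seq_incr_1 (gauss_seq (x - 1))). auto.
    apply (is_lim_seq_incr_1 (fun n => INR n * (x - 1) / (x - 1 + 1 + INR n))).
    apply lim_aux. lra.
Qed.

Lemma Gamma_spec x : 0 < x -> 0 < Gamma x /\ is_lim_seq (gauss_seq x) (Gamma x).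
Proof.
  intro hx. destruct (conv_all x hx) as [l [hl hc]].
  assert (Un_cv (gauss_seq x) (Gamma x)).
  { unfold Gamma. apply epsilon_spec. exists l. apply is_lim_seq_Reals; auto. }
  assert (Gamma x = l). { eapply UL_sequence. eauto. apply is_lim_seq_Reals; auto. }
  rewrite H0. auto.
Qed.

Definition lsum (l : list nat) (f : nat -> R) : R := fold_right (fun j acc => f j + acc) 0 l.

Lemma lsum_app l1 l2 f : lsum (l1 ++ l2) f = lsum l1 f + lsum l2 f.
Proof. induction l1; simpl; [ring|]. unfold lsum in *. simpl. rewrite IHl1. ring. Qed.

Lemma lsum_ext l f g : (forall j, In j l -> f j = g j) -> lsum l f = lsum l g.
Proof. induction l; simpl; auto. intro H. rewrite H, IHl; auto. Qed.

Lemma lsum_plus l f g : lsum l (fun j => f j + g j) = lsum l f + lsum l g.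
Proof. induction l; simpl; [ring|]. rewrite IHl. ring. Qed.

Lemma lsum_scal l c f : lsum l (fun j => c * f j) = c * lsum l f.
Proof. induction l; simpl; [ring|]. rewrite IHl. ring. Qed.

Lemma sum_f_lsum N f : (1 <= N)%nat -> sum_f 1 N f = lsum (seq 1 N) f.
Proof.
  intro hN. unfold sum_f. destruct N as [|n]; [lia|]. replace (S n - 1)%nat with n by lia.
  clear hN. induction n.
  - simpl. ring.
  - rewrite seq_S, lsum_app. simpl sum_f_R0. rewrite IHn. unfold lsum at 3. cbn [fold_right].
    replace (S (n + 1))%nat with (1 + S n)%nat by lia. ring.
Qed.

Lemma quad_lsum N H v : (1 <= N)%nat ->
  quad_form N H v = lsum (seq 1 N) (fun j => lsum (seq 1 N) (fun k => v j * H j k * v k)).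
Proof.
  intro hN. unfold quad_form. rewrite sum_f_lsum by auto. apply lsum_ext.
  intros j _. apply sum_f_lsum; auto.
Qed.

Definition gsum (L : list (nat -> R)) (j k : nat) : R :=
  fold_right (fun f acc => f j * f k + acc) 0 L.

Definition inr N j := (1 <= j <= N)%nat.

Definition IsGram N (K : nat -> nat -> R) :=
  exists L, forall j k, inr N j -> inr N k -> K j k = gsum L j k.

Lemma lsum_0 l : lsum l (fun _ => 0) = 0.
Proof. induction l; simpl; auto. rewrite IHl; ring. Qed.

Lemma quad_gsum l v L : lsum l (fun j => lsum l (fun k => v j * gsum L j k * v k)) =
  fold_right (fun f acc => (lsum l (fun j => v j * f j))^2 + acc) 0 L.
Proof.
  induction L as [|f L IH].
  - simpl. transitivity (lsum l (fun _ => 0)); [|apply lsum_0].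
    apply lsum_ext; intros j _. transitivity (lsum l (fun _ => 0)); [|apply lsum_0].
    apply lsum_ext; intros; ring.
  - change (fold_right (fun f0 acc => (lsum l (fun j => v j * f0 j))^2 + acc) 0 (f :: L))
      with ((lsum l (fun j => v j * f j))^2 + fold_right (fun f0 acc => (lsum l (fun j => v j * f0 j))^2 + acc) 0 L).
    rewrite <- IH. change (gsum (f :: L)) with (fun j k => f j * f k + gsum L j k). cbv beta.
    set (S := lsum l (fun j => v j * f j)).
    assert (E : S ^ 2 = lsum l (fun j => (v j * f j) * S)).
    { rewrite (lsum_ext l _ (fun j => S * (v j * f j))) by (intros; ring).
      rewrite lsum_scal. unfold S. ring. }
    rewrite E, <- lsum_plus. apply lsum_ext; intros j _.
    unfold S. rewrite <- lsum_scal, <- lsum_plus. apply lsum_ext; intros; ring.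
Qed.

Lemma gram_quad N K v : (1 <= N)%nat -> IsGram N K -> 0 <= quad_form N K v.
Proof.
  intros hN [L HL]. rewrite quad_lsum by auto.
  set (l := seq 1 N).
  rewrite (lsum_ext l _ (fun j => lsum l (fun k => v j * gsum L j k * v k))).
  2:{ intros j hj. apply lsum_ext. intros k hk. rewrite HL; auto.
      unfold l in *; apply in_seq in hj; unfold inr; lia.
      unfold l in *; apply in_seq in hk; unfold inr; lia. }
  rewrite quad_gsum. clear. induction L; simpl; [lra|].
  apply Rplus_le_le_0_compat; [apply pow2_ge_0|auto].
Qed.

Lemma gsum_app L1 L2 j k : gsum (L1 ++ L2) j k = gsum L1 j k + gsum L2 j k.
Proof. induction L1; simpl; [ring|]. unfold gsum in *. simpl. rewrite IHL1. ring. Qed.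

Definition mulf (f g : nat -> R) := fun j => f j * g j.

Lemma gsum_map f L j k : gsum (map (mulf f) L) j k = f j * f k * gsum L j k.
Proof. induction L; simpl; [ring|]. unfold gsum in *. simpl. rewrite IHL. unfold mulf. ring. Qed.

Lemma gsum_prod L1 L2 j k :
  gsum (flat_map (fun f => map (mulf f) L2) L1) j k = gsum L1 j k * gsum L2 j k.
Proof.
  induction L1 as [|f L1 IH]; simpl; [unfold gsum; simpl; ring|].
  rewrite gsum_app, gsum_map, IH. unfold gsum; simpl. ring.
Qed.

Lemma gram_ext N K1 K2 : (forall j k, inr N j -> inr N k -> K1 j k = K2 j k) ->
  IsGram N K1 -> IsGram N K2.
Proof. intros H [L HL]. exists L. intros. rewrite <- H; auto. Qed.

Lemma gram_add N K1 K2 : IsGram N K1 -> IsGram N K2 -> IsGram N (fun j k => K1 j k + K2 j k).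
Proof. intros [L1 H1] [L2 H2]. exists (L1 ++ L2). intros. rewrite gsum_app, H1, H2; auto. Qed.

Lemma gram_mul N K1 K2 : IsGram N K1 -> IsGram N K2 -> IsGram N (fun j k => K1 j k * K2 j k).
Proof.
  intros [L1 H1] [L2 H2]. exists (flat_map (fun f => map (mulf f) L2) L1).
  intros. rewrite gsum_prod, H1, H2; auto.
Qed.

Lemma gram_one N : IsGram N (fun _ _ => 1).
Proof. exists [fun _ => 1]. intros. unfold gsum; simpl; ring. Qed.

Lemma gram_scal N c K : 0 <= c -> IsGram N K -> IsGram N (fun j k => c * K j k).
Proof.
  intros hc [L H]. exists (map (mulf (fun _ => sqrt c)) L). intros.
  rewrite gsum_map, H, sqrt_sqrt; auto.
Qed.

Section Cauchy.
Variable x : nat -> R.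
Definition cu m j := sqrt (2 * x m) / (x j + x m).
Definition cg m j := (x j - x m) / (x j + x m).
Fixpoint Gp m j := match m with O => 1 | S m' => Gp m' j * cg (S m') j end.
Definition psi m j := cu (S m) j * Gp m j.
Definition Rk m j k := Gp m j * Gp m k * / (x j + x k).

Lemma cauchy_id m j k : 0 < x m -> 0 < x j -> 0 < x k ->
  / (x j + x k) = cu m j * cu m k + cg m j * cg m k * / (x j + x k).
Proof.
  intros hm hj hk. unfold cu, cg.
  assert (E : sqrt (2 * x m) / (x j + x m) * (sqrt (2 * x m) / (x k + x m))
     = (sqrt (2 * x m) * sqrt (2 * x m)) / ((x j + x m) * (x k + x m))) by (field; lra).
  rewrite E, sqrt_sqrt by lra. field. lra.
Qed.

Lemma Rk_step m j k : 0 < x (S m) -> 0 < x j -> 0 < x k ->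
  Rk m j k = psi m j * psi m k + Rk (S m) j k.
Proof.
  intros. unfold Rk, psi. cbn [Gp].
  rewrite (cauchy_id (S m) j k) at 1 by auto. ring.
Qed.

Lemma Gp_zero m j : (1 <= j <= m)%nat -> Gp m j = 0.
Proof.
  induction m; intros; [lia|]. cbn [Gp].
  destruct (Nat.eq_dec j (S m)) as [->|].
  - unfold cg. replace (x (S m) - x (S m)) with 0 by ring. unfold Rdiv. ring.
  - rewrite IHm by lia. ring.
Qed.

Lemma gram_cauchy N : (forall j, inr N j -> 0 < x j) -> IsGram N (fun j k => / (x j + x k)).
Proof.
  intros hx. exists (map psi (seq 0 N)). intros j k hj hk.
  assert (Hq : forall q p, (p + q <= N)%nat ->
     Rk p j k = gsum (map psi (seq p q)) j k + Rk (p + q) j k).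
  { induction q; intros p hpq.
    - simpl. rewrite Nat.add_0_r. unfold gsum; simpl; ring.
    - rewrite Rk_step by (apply hx; unfold inr in *; lia).
      rewrite IHq by lia. replace (S p + q)%nat with (p + S q)%nat by lia.
      simpl. unfold gsum; simpl. ring. }
  specialize (Hq N 0%nat ltac:(lia)). simpl in Hq.
  unfold Rk at 1 in Hq. simpl Gp in Hq.
  unfold Rk in Hq. rewrite (Gp_zero N j) in Hq by (unfold inr in hj; lia).
  replace (/ (x j + x k)) with (1 * 1 * / (x j + x k)) by ring. rewrite Hq. ring.
Qed.
End Cauchy.

Definition Fk (a d : R) (i j k : nat) := 1 + d / (INR (j + k) + a + INR i).
Fixpoint Tn (a d : R) (n j k : nat) : R :=
  match n with O => Fk a d 0 j k | S m => Tn a d m j k * Fk a d (S m) j k end.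

Lemma gram_F N a d i : -1 < a -> 0 <= d -> IsGram N (Fk a d i).
Proof.
  intros ha hd.
  set (x := fun j => INR j + (a + INR i) / 2).
  apply gram_ext with (fun j k => 1 + d * / (x j + x k)).
  { intros j k hj hk. unfold Fk, x. rewrite plus_INR. unfold Rdiv. f_equal. f_equal. f_equal. field. }
  apply (gram_add N (fun _ _ => 1)). apply gram_one.
  apply (gram_scal N d (fun j k => / (x j + x k))); auto.
  apply gram_cauchy. intros j hj. unfold x. unfold inr in hj.
  assert (1 <= INR j) by (apply (le_INR 1); lia). pose proof (pos_INR i). lra.
Qed.

Lemma gram_T N a d n : -1 < a -> 0 <= d -> IsGram N (Tn a d n).
Proof.
  intros. induction n; simpl. apply gram_F; auto.
  apply (gram_mul N (Tn a d n) (Fk a d (S n))); auto. apply gram_F; auto.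
Qed.

Lemma rp_ratio a d n j k : 0 < INR (j + k) + a -> 0 <= d ->
  rising_prod (INR (j + k) + a + d) n / rising_prod (INR (j + k) + a) n = Tn a d n j k.
Proof.
  intros hs hd. set (s := INR (j + k)) in *.
  induction n; cbn [rising_prod Tn]; unfold Fk; fold s.
  - simpl INR. field. lra.
  - rewrite <- IHn. pose proof (rp_pos (s + a) n hs). pose proof (pos_INR (S n)).
    field. lra.
Qed.

Lemma gauss_div y z n : 0 < y -> 0 < z ->
  gauss_seq y n / gauss_seq z n = Rpower (INR n) (y - z) * (rising_prod z n / rising_prod y n).
Proof.
  intros hy hz. unfold gauss_seq.
  replace (Rpower (INR n) y) with (Rpower (INR n) z * Rpower (INR n) (y - z))
    by (rewrite <- Rpower_plus; f_equal; ring).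
  pose proof (rp_pos y n hy). pose proof (rp_pos z n hz).
  assert (0 < Rpower (INR n) z) by apply exp_pos.
  assert (0 < INR (fact n)) by (apply lt_0_INR, lt_O_fact).
  field. repeat split; lra.
Qed.

Lemma lsum_lim (l : list nat) (f : nat -> nat -> R) (g : nat -> R) :
  (forall j, In j l -> is_lim_seq (fun n => f n j) (g j)) ->
  is_lim_seq (fun n => lsum l (f n)) (lsum l g).
Proof.
  induction l as [|a l IH]; intros H; simpl.
  - apply is_lim_seq_const.
  - apply (is_lim_seq_plus' (fun n => f n a) (fun n => lsum l (f n))).
    apply H; simpl; auto. apply IH; intros; apply H; simpl; auto.
Qed.

Theorem mainTheorem10 (alpha beta gamma : R) (N : nat)
  (ha : -1 < alpha) (hb : -1 < beta) (hg : -1 < gamma)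
  (hag : Rabs (alpha - gamma) < 1) (hab : alpha + beta <= -1)
  (hN : (1 <= N)%nat) :
  (forall j k : nat, (1 <= j <= N)%nat -> (1 <= k <= N)%nat ->
     Htilde alpha beta gamma j k = Htilde alpha beta gamma k j) /\
  (forall v : nat -> R, 0 <= quad_form N (Htilde alpha beta gamma) v).
Proof.
  split.
  { intros j k _ _. unfold Htilde. rewrite Nat.add_comm. reflexivity. }
  intro v.
  assert (hd : 0 <= gamma - alpha + 1) by (apply Rabs_def2 in hag; lra).
  set (K := fun n j k => gauss_seq (INR (j + k) + alpha + beta + 1) n /
                         gauss_seq (INR (j + k) + gamma + beta + 2) n).
  assert (hs : forall j k, inr N j -> inr N k -> 2 <= INR (j + k)).
  { intros j k hj hk. unfold inr in *. apply (le_INR 2). lia. }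
  assert (hK : forall n, IsGram N (K n)).
  { intro n. apply gram_ext with
      (fun j k => Rpower (INR n) (- (gamma - alpha + 1)) * Tn (alpha + beta + 1) (gamma - alpha + 1) n j k).
    { intros j k hj hk. specialize (hs j k hj hk). unfold K. rewrite gauss_div by lra.
      replace (INR (j + k) + alpha + beta + 1 - (INR (j + k) + gamma + beta + 2))
        with (- (gamma - alpha + 1)) by ring.
      rewrite <- rp_ratio by lra. f_equal. f_equal. f_equal. ring. f_equal. ring. }
    apply (gram_scal N _ (Tn (alpha + beta + 1) (gamma - alpha + 1) n)).
    left; apply exp_pos. apply gram_T; lra. }
  assert (hlim : is_lim_seq (fun n => quad_form N (K n) v) (quad_form N (Htilde alpha beta gamma) v)).
  { apply is_lim_seq_ext with
      (fun n => lsum (seq 1 N) (fun j => lsum (seq 1 N) (fun k => v j * K n j k * v k))).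
    { intro n. rewrite quad_lsum; auto. }
    rewrite quad_lsum by auto.
    apply (lsum_lim (seq 1 N) (fun n j => lsum (seq 1 N) (fun k => v j * K n j k * v k))).
    intros j hj.
    apply (lsum_lim (seq 1 N) (fun n k => v j * K n j k * v k)).
    intros k hk. apply in_seq in hj. apply in_seq in hk.
    assert (hjk : 2 <= INR (j + k)) by (apply hs; unfold inr; lia).
    apply (is_lim_seq_mult' (fun n => v j * K n j k) (fun _ => v k)); [|apply is_lim_seq_const].
    apply (is_lim_seq_mult' (fun _ => v j) (fun n => K n j k)); [apply is_lim_seq_const|].
    unfold K, Htilde.
    destruct (Gamma_spec (INR (j + k) + alpha + beta + 1)) as [_ h1]; [lra|].
    destruct (Gamma_spec (INR (j + k) + gamma + beta + 2)) as [h2 h3]; [lra|].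
    apply is_lim_seq_div'; auto. lra. }
  assert (Rbar_le 0 (quad_form N (Htilde alpha beta gamma) v)).
  { apply (is_lim_seq_le (fun _ => 0) (fun n => quad_form N (K n) v)).
    intro n. apply gram_quad; auto. apply is_lim_seq_const. exact hlim. }
  simpl in H. exact H.
Qed.
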